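(* Let $\mathcal{S}_0\subset\mathbb{R}^n$ be a compact convex set of diameter $D$, and let $f_t,g_t:\mathcal{S}_0\to\mathbb{R}$, $t=1,\dots,T$, be convex with (sub)gradients bounded in norm by $G$ and with $f_t(\theta)\le F$, $g_t(\theta)\le F$ on $\mathcal{S}_0$. For $V\ge0$ and $K\in\{1,\dots,T\}$ let $V_K$ be the set of sequences $z_1,\dots,z_T\in\mathcal{S}_0$ with $\sum_{t=2}^T\|z_t-z_{t-1}\|\le V$ and exactly $K$ indices $i$ with $g_i(z_i)\le0$, and assume $V_K\neq\emptyset$. Define $\mathcal{L}_t(\theta,\lambda)=f_t(\theta)+\lambda[g_t(\theta)]_+-\frac{\sigma\eta}2\lambda^2$ and run: $\theta_1\in\mathcal{S}_0$, $\lambda_t=[g_t(\theta_t)]_+/(\sigma\eta)$, $\theta_{t+1}=\Pi_{\mathcal{S}_0}(\theta_t-\eta\nabla_\theta\mathcal{L}_t(\theta_t,\lambda_t))$ (a subgradient; $\partial[g_t]_+=0$ where $g_t\le0$). Set $\sigma=2G^2$ and $\eta=O\big(\sqrt{(T-K+1+V)/T}\big)$. Then for any $z_1^T\in V_K$, $$\sum_{t=1}^T\big(f_t(\theta_t)-f_t(z_t)\big)\le O\big(\sqrt{T(T-K+1+V)}\big),\qquad\sum_{t=1}^T\big([g_t(\theta_t)]_+\big)^2\le O\big(\sqrt{T(T-K+1+V)}\big).$$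
   Context: $[a]_+=\max\{a,0\}$, $\Pi_{\mathcal{S}_0}$ is Euclidean projection onto $\mathcal{S}_0$. $\eta=O(\cdot)$ means $\eta=c\sqrt{(T-K+1+V)/T}$ for a constant $c>0$; the $O(\cdot)$ in the conclusions hides constants depending only on $G,F,D,c$. *)

(* Defs.v *)
From HB Require Import structures.
From mathcomp Require Import all_boot all_order all_algebra.
From mathcomp Require Import all_classical all_reals all_analysis.
Set Implicit Arguments. Unset Strict Implicit. Unset Printing Implicit Defensive.
Import Order.TTheory GRing.Theory Num.Theory.
Import numFieldNormedType.Exports.
Local Open Scope ring_scope.
Local Open Scope classical_set_scope.

Section Defs.
Variable R : realType.
Variable n : nat.
Notation vec := 'rV[R]_n.

Definition dotv (u v : vec) : R := \sum_(i < n) u ord0 i * v ord0 i.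
Definition enorm (u : vec) : R := Num.sqrt (dotv u u).

Definition pospart (a : R) : R := Num.max a 0.

Definition convex_set_of (S : set vec) : Prop :=
  forall x y, S x -> S y -> forall a : R, 0 <= a -> a <= 1 ->
    S (a *: x + (1 - a) *: y).

Definition convex_fun_on (S : set vec) (h : vec -> R) : Prop :=
  forall x y, S x -> S y -> forall a : R, 0 <= a -> a <= 1 ->
    h (a *: x + (1 - a) *: y) <= a * h x + (1 - a) * h y.

Definition is_subgrad_on (S : set vec) (h : vec -> R) (x d : vec) : Prop :=
  forall y, S y -> h x + dotv d (y - x) <= h y.

Definition is_euclid_proj (S : set vec) (p : vec -> vec) : Prop :=
  forall x, S (p x) /\ forall y, S y -> enorm (x - p x) <= enorm (x - y).

(* theta-subgradient of L_t(., lambda) at theta: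
   df + lambda * d[g]_+ , with d[g]_+ = 0 where g <= 0 and = dg where g > 0 *)
Definition lag_grad (f g : nat -> vec -> R) (df dg : nat -> vec -> vec)
  (t : nat) (th : vec) (lam : R) : vec :=
  df t th + (if 0 < g t th then lam else 0) *: dg t th.

Definition lam_of (g : nat -> vec -> R) (sigma eta : R) (t : nat) (th : vec) : R :=
  pospart (g t th) / (sigma * eta).

(* theta_aux k = theta_{k+1} *)
Fixpoint theta_aux (proj : vec -> vec) (f g : nat -> vec -> R)
  (df dg : nat -> vec -> vec) (sigma eta : R) (th1 : vec) (k : nat) : vec :=
  match k with
  | 0 => th1
  | k'.+1 =>
      let th := theta_aux proj f g df dg sigma eta th1 k' in
      proj (th - eta *: lag_grad f g df dg k'.+1 th (lam_of g sigma eta k'.+1 th))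
  end.

Definition theta (proj : vec -> vec) (f g : nat -> vec -> R)
  (df dg : nat -> vec -> vec) (sigma eta : R) (th1 : vec) (t : nat) : vec :=
  theta_aux proj f g df dg sigma eta th1 t.-1.

Definition in_VK (S : set vec) (g : nat -> vec -> R) (T K : nat) (V : R)
  (z : nat -> vec) : Prop :=
  (forall t, (1 <= t <= T)%N -> S (z t)) /\
  \sum_(2 <= t < T.+1) enorm (z t - z t.-1) <= V /\
  #|[set i : 'I_T.+1 | (1 <= i)%N & g i (z i) <= 0]| = K.

End Defs.

(* Main.v *)
Require Import Defs.
From HB Require Import structures.
From mathcomp Require Import all_boot all_order all_algebra.
From mathcomp Require Import all_classical all_reals all_analysis.
From mathcomp Require Import ring lra.
Import Order.TTheory GRing.Theory Num.Theory.
Import numFieldNormedType.Exports.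
Local Open Scope ring_scope.
Local Open Scope classical_set_scope.
Set Implicit Arguments. Unset Strict Implicit.


Section Vec.
Variable R : realType.
Variable n : nat.
Notation vec := 'rV[R]_n.
Local Notation N u := (dotv u u).

Lemma dotvC (u v : vec) : dotv u v = dotv v u.
Proof. by apply: eq_bigr => i _; rewrite mulrC. Qed.

Lemma dotvDl (u v w : vec) : dotv (u + v) w = dotv u w + dotv v w.
Proof. rewrite /dotv -big_split; apply: eq_bigr => i _; rewrite !mxE /=; ring. Qed.

Lemma dotvBl (u v w : vec) : dotv (u - v) w = dotv u w - dotv v w.
Proof. rewrite /dotv -sumrB; apply: eq_bigr => i _; rewrite !mxE; ring. Qed.

Lemma dotvZl a (u w : vec) : dotv (a *: u) w = a * dotv u w.
Proof. rewrite /dotv mulr_sumr; apply: eq_bigr => i _; rewrite !mxE; ring. Qed.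

Lemma dotvNr (u w : vec) : dotv w (- u) = - dotv w u.
Proof. rewrite /dotv -sumrN; apply: eq_bigr => i _; rewrite !mxE /=; ring. Qed.

Lemma dotvDr (u v w : vec) : dotv w (u + v) = dotv w u + dotv w v.
Proof. by rewrite dotvC dotvDl !(dotvC w). Qed.
Lemma dotvBr (u v w : vec) : dotv w (u - v) = dotv w u - dotv w v.
Proof. by rewrite dotvC dotvBl !(dotvC w). Qed.
Lemma dotvZr a (u w : vec) : dotv w (a *: u) = a * dotv w u.
Proof. by rewrite dotvC dotvZl dotvC. Qed.

Lemma dotv_ge0 (u : vec) : 0 <= N u.
Proof. by apply: sumr_ge0 => i _; rewrite -expr2 sqr_ge0. Qed.

Lemma N_add (u v : vec) : N (u + v) = N u + 2 * dotv u v + N v.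
Proof. rewrite !dotvDl !dotvDr (dotvC v u); ring. Qed.
Lemma N_sub (u v : vec) : N (u - v) = N u - 2 * dotv u v + N v.
Proof. rewrite !dotvBl !dotvBr (dotvC v u); ring. Qed.
Lemma N_scale a (u : vec) : N (a *: u) = a ^+ 2 * N u.
Proof. rewrite dotvZl dotvZr; ring. Qed.
Lemma N_opp (u : vec) : N (- u) = N u.
Proof. by rewrite -scaleN1r N_scale; rewrite expr2 mulN1r opprK mul1r. Qed.

Lemma enorm_ge0 (u : vec) : 0 <= enorm u.
Proof. exact: sqrtr_ge0. Qed.
Lemma enorm_sq (u : vec) : enorm u ^+ 2 = N u.
Proof. by rewrite /enorm sqr_sqrtr // dotv_ge0. Qed.
Lemma N_le (u : vec) a : enorm u <= a -> N u <= a ^+ 2.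
Proof.
move=> h; rewrite -enorm_sq; have h0 := enorm_ge0 u.
by rewrite lerXn2r // ?nnegrE //; apply: le_trans h.
Qed.

Lemma young (u v : vec) k : 0 < k -> 2 * dotv u v <= k * N u + N v / k.
Proof.
move=> hk; have := dotv_ge0 (k *: u - v).
rewrite N_sub N_scale dotvZl => h.
have hk' : k != 0 by rewrite gt_eqF.
suff : 2 * dotv u v * k <= (k * N u + N v / k) * k.
  by rewrite ler_pM2r.
have -> : (k * N u + N v / k) * k = k ^+ 2 * N u + N v by field.
lra.
Qed.

Lemma lim_le0 (x b : R) : (forall e, 0 < e -> e <= 1 -> x <= e * b) -> x <= 0.
Proof.
move=> h; rewrite leNgt; apply/negP => hx.
case: (lerP b 0) => hb.
  by have := h 1 ltr01 (lexx _); lra.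
have hxb : 0 < x + b by lra.
have := h (x / (x + b)).
rewrite divr_gt0 // ler_pdivrMr // mul1r.
have -> : x / (x + b) * b = x * b / (x + b) by rewrite mulrAC.
rewrite ler_pdivlMr //.
move=> /(_ isT); have : x <= x + b by lra.
move=> -> /(_ isT); nra.
Qed.

Lemma CS (u v : vec) : dotv u v <= enorm u * enorm v.
Proof.
have hu := enorm_ge0 u; have hv := enorm_ge0 v.
have su := enorm_sq u; have sv := enorm_sq v.
case: (eqVneq (enorm u) 0) => [hu0|hu0].
  rewrite hu0 mul0r; apply: (@lim_le0 _ (N v / 2)) => e he _.
  have := young u v (k:=e^-1); rewrite invr_gt0 => /(_ he).
  rewrite invrK -su hu0 expr2 !mul0r mulr0 add0r => h.
  rewrite mulrA (mulrC e).
  lra.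
case: (eqVneq (enorm v) 0) => [hv0|hv0].
  rewrite hv0 mulr0; apply: (@lim_le0 _ (N u / 2)) => e he _.
  have := young v u (k:=e^-1); rewrite invr_gt0 => /(_ he).
  rewrite invrK -sv hv0 expr2 !mul0r mulr0 add0r dotvC => h.
  rewrite mulrA (mulrC e).
  lra.
have hup : 0 < enorm u by rewrite lt_def hu0.
have hvp : 0 < enorm v by rewrite lt_def hv0.
have := young u v (k:=enorm v / enorm u); rewrite divr_gt0 // => /(_ isT).
rewrite -su -sv.
have -> : enorm v / enorm u * enorm u ^+ 2 + enorm v ^+ 2 / (enorm v / enorm u)
   = 2 * (enorm u * enorm v) by field; rewrite hu0 hv0.
lra.
Qed.

End Vec.


Section Vec2.
Variable R : realType.
Variable n : nat.
Notation vec := 'rV[R]_n.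
Local Notation N u := (dotv u u).

Lemma proj_nonexp (S : set vec) (p : vec -> vec) (y z : vec) :
  convex_set_of S -> is_euclid_proj S p -> S z -> N (p y - z) <= N (y - z).
Proof.
move=> hS hp hz; have [hq hmin] := hp y; set q := p y in hq hmin *.
have key : dotv (y - q) (z - q) <= 0.
  apply: (@lim_le0 _ _ (N (z - q) / 2)) => e he he1.
  have hw := hS z q hz hq e (ltW he) he1.
  have := hmin _ hw; rewrite /enorm ler_sqrt ?dotv_ge0 //.
  have -> : y - (e *: z + (1 - e) *: q) = (y - q) - e *: (z - q).
    by apply/rowP => i; rewrite !mxE /=; ring.
  rewrite (N_sub (y - q)) N_scale dotvZr => h.
  have h2 : 2 * e * dotv (y - q) (z - q) <= e ^+ 2 * N (z - q) by lra.
  have : e * (2 * dotv (y - q) (z - q)) <= e * (e * N (z - q)).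
    have -> : e * (2 * dotv (y - q) (z - q)) = 2 * e * dotv (y - q) (z - q) by ring.
    have -> : e * (e * N (z - q)) = e ^+ 2 * N (z - q) by ring.
    exact: h2.
  rewrite ler_pM2l // => h3.
  have -> : e * (N (z - q) / 2) = (e * N (z - q)) / 2 by rewrite mulrA.
  lra.
have e1 : N (y - z) = N (y - q) + 2 * dotv (y - q) (q - z) + N (q - z).
  by rewrite -N_add addrA subrK.
have e2 : dotv (y - q) (q - z) = - dotv (y - q) (z - q) by rewrite -dotvNr opprB.
rewrite e1 e2; have := dotv_ge0 (y - q); lra.
Qed.

Lemma descent (S : set vec) (p : vec -> vec) (a d z : vec) (e : R) :
  convex_set_of S -> is_euclid_proj S p -> S z ->
  N (p (a - e *: d) - z) <= N (a - z) - 2 * e * dotv d (a - z) + e ^+ 2 * N d.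
Proof.
move=> hS hp hz; apply: le_trans (proj_nonexp _ hS hp hz) _.
have -> : a - e *: d - z = (a - z) - e *: d by apply/rowP => i; rewrite !mxE /=; ring.
rewrite (N_sub (a - z)) N_scale dotvZr dotvC; lra.
Qed.

Lemma N_add_le (u v : vec) : N (u + v) <= 2 * N u + 2 * N v.
Proof.
have := dotv_ge0 (u - v); rewrite N_sub N_add; lra.
Qed.

End Vec2.

Lemma my_telescope (R : realType) (u w : nat -> R) (T : nat) : (1 <= T)%N ->
  \sum_(1 <= t < T.+1) (u t - w t) = u 1%N - w T + \sum_(2 <= t < T.+1) (u t - w t.-1).
Proof.
elim: T => [//|T IH] _.
case: T IH => [|T] IH.
  by rewrite big_nat1 big_geq // addr0.
rewrite big_nat_recr // IH // [in RHS]big_nat_recr //=.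
lra.
Qed.


Section Step.
Variable R : realType.
Variable n : nat.
Notation vec := 'rV[R]_n.
Local Notation N u := (dotv u u).

Lemma pospart_pos (a : R) : 0 < a -> pospart a = a.
Proof. by move=> h; apply/max_idPl; exact: ltW. Qed.
Lemma pospart_npos (a : R) : a <= 0 -> pospart a = 0.
Proof. by move=> h; apply/max_idPr. Qed.
Lemma pospart_ge0 (a : R) : 0 <= pospart a.
Proof. by rewrite /pospart le_max lexx orbT. Qed.
Lemma pospart_ge (a : R) : a <= pospart a.
Proof. by rewrite /pospart le_max lexx. Qed.

Lemma step_arith (G eta fa fz ga gz Na Nb X1 X2 ND mu q r : R) :
  0 < G -> 0 < eta -> 0 <= mu -> 0 <= ND ->
  fa - X1 <= fz -> ga - X2 <= gz ->
  Nb <= Na - 2 * eta * (X1 + mu * X2) + eta ^+ 2 * ND ->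
  ND <= 2 * G ^+ 2 + 2 * mu ^+ 2 * G ^+ 2 ->
  mu * ga = 2 * G ^+ 2 * eta * mu ^+ 2 ->
  gz <= q -> q = G * r ->
  2 * eta * (fa - fz) + G ^+ 2 * eta ^+ 2 * mu ^+ 2 <= Na - Nb + 2 * eta ^+ 2 * G ^+ 2 + r ^+ 2.
Proof.
move=> hG he hmu hND h1 h2 hd hN hmg hq hr.
have A : eta * (fa - X1) <= eta * fz by rewrite ler_pM2l //; lra.
have hem : 0 <= eta * mu by apply: mulr_ge0 => //; exact: ltW.
have B : eta * mu * (ga - X2) <= eta * mu * gz by apply: ler_wpM2l => //; lra.
have C : eta ^+ 2 * ND <= eta ^+ 2 * (2 * G ^+ 2 + 2 * mu ^+ 2 * G ^+ 2).
  by apply: ler_wpM2l => //; rewrite sqr_ge0.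
have D : eta * mu * gz <= eta * mu * q by apply: ler_wpM2l.
have E : 0 <= (G * eta * mu - r) ^+ 2 by rewrite sqr_ge0.
rewrite hr in D.
have F : eta * mu * ga = 2 * G ^+ 2 * eta ^+ 2 * mu ^+ 2.
  by rewrite -mulrA hmg; ring.
nra.
Qed.

Lemma shift_bound (x z z' : vec) (D : R) : 0 <= D ->
  enorm (z' - x) <= D -> enorm (z - z') <= D ->
  N (x - z) - N (x - z') <= 3 * D * enorm (z - z').
Proof.
move=> hD h1 h2.
have -> : x - z = - ((z' - x) + (z - z')) by apply/rowP => i; rewrite !mxE /=; ring.
have -> : x - z' = - (z' - x) by rewrite opprB.
rewrite !N_opp N_add.
have hc := CS (z' - x) (z - z').
have hw := enorm_ge0 (z - z'); have hx := enorm_ge0 (z' - x).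
rewrite -(enorm_sq (z - z')).
nra.
Qed.

End Step.

Lemma count_ind (R : realType) (P : nat -> bool) (T K : nat) :
  #|[set i : 'I_T.+1 | (1 <= i)%N & P i]| = K ->
  \sum_(1 <= t < T.+1) (if P t then 0 else 1 : R) = T%:R - K%:R.
Proof.
move=> hK.
have hs : \sum_(1 <= t < T.+1) (if P t then 1 else 0 : R) = K%:R.
  rewrite -hK -sum1_card natr_sum [RHS]big_mkcond /=.
  under [RHS]eq_bigr do rewrite inE.
  rewrite -(big_mkord xpredT (fun i => if (1 <= i)%N && P i then 1%:R else 0 : R)).
  rewrite [RHS]big_ltn //= add0r.
  by apply: eq_big_nat => i /andP [hi _]; rewrite hi.
have -> : \sum_(1 <= t < T.+1) (if P t then 0 else 1 : R)
   = \sum_(1 <= t < T.+1) (1 - if P t then 1 else 0 : R).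
  by apply: eq_bigr => i _; case: (P i); rewrite ?subrr ?subr0.
by rewrite sumrB hs sumr_const_nat subSS subn0.
Qed.


Lemma step_vec (R : realType) (n : nat) (S : set 'rV[R]_n) (proj : 'rV[R]_n -> 'rV[R]_n)
  (f g : nat -> 'rV[R]_n -> R) (df dg : nat -> 'rV[R]_n -> 'rV[R]_n) (G eta : R) (t : nat)
  (a z : 'rV[R]_n) :
  convex_set_of S -> is_euclid_proj S proj -> 0 < G -> 0 < eta -> S a -> S z ->
  is_subgrad_on S (f t) a (df t a) -> is_subgrad_on S (g t) a (dg t a) ->
  enorm (df t a) <= G -> enorm (dg t a) <= G ->
  2 * eta * (f t a - f t z) + pospart (g t a) ^+ 2 / (4 * G ^+ 2)
  <= dotv (a - z) (a - z)
     - dotv (proj (a - eta *: lag_grad f g df dg t a (lam_of g (2 * G ^+ 2) eta t a)) - z)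
            (proj (a - eta *: lag_grad f g df dg t a (lam_of g (2 * G ^+ 2) eta t a)) - z)
     + 2 * eta ^+ 2 * G ^+ 2 + pospart (g t z) ^+ 2 / G ^+ 2.
Proof.
move=> hS hp hG he ha hz sf sg nf ng.
set mu := if 0 < g t a then lam_of g (2 * G ^+ 2) eta t a else 0.
have hlg : lag_grad f g df dg t a (lam_of g (2 * G ^+ 2) eta t a) = df t a + mu *: dg t a by [].
rewrite hlg.
have hd := descent a (df t a + mu *: dg t a) eta hS hp hz.
have hG2 : 0 < G ^+ 2 by rewrite exprn_gt0.
have hGne : G != 0 by rewrite gt_eqF.
have hene : eta != 0 by rewrite gt_eqF.
have [hmu hp_eq hmg] : [/\ 0 <= mu, pospart (g t a) = 2 * G ^+ 2 * eta * mu
                         & mu * g t a = 2 * G ^+ 2 * eta * mu ^+ 2].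
  rewrite /mu /lam_of; case: ifP => hg.
    rewrite pospart_pos //; split.
    - by apply: divr_ge0; [exact: ltW | apply: mulr_ge0; apply: ltW => //; rewrite mulr_gt0].
    - by field; rewrite hGne hene.
    - by field; rewrite hGne hene.
  rewrite pospart_npos; last by rewrite leNgt hg.
  by split; [exact: lexx | ring | ring].
have hND : dotv (df t a + mu *: dg t a) (df t a + mu *: dg t a) <= 2 * G ^+ 2 + 2 * mu ^+ 2 * G ^+ 2.
  apply: le_trans (N_add_le _ _) _.
  rewrite N_scale.
  have := N_le nf; have := N_le ng; have := sqr_ge0 mu; nra.
have h1 : f t a - dotv (df t a) (a - z) <= f t z.
  by have := sf z hz; rewrite -opprB dotvNr.
have h2 : g t a - dotv (dg t a) (a - z) <= g t z.
  by have := sg z hz; rewrite -opprB dotvNr.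
have hX : dotv (df t a + mu *: dg t a) (a - z)
    = dotv (df t a) (a - z) + mu * dotv (dg t a) (a - z) by rewrite dotvDl dotvZl.
rewrite hX in hd.
have hq := pospart_ge (g t z).
have := step_arith hG he hmu (dotv_ge0 _) h1 h2 hd hND hmg hq
  (r := pospart (g t z) / G) (_ : _ = G * (pospart (g t z) / G)).
have -> : pospart (g t a) ^+ 2 / (4 * G ^+ 2) = G ^+ 2 * eta ^+ 2 * mu ^+ 2.
  by rewrite hp_eq; field.
have -> : (pospart (g t z) / G) ^+ 2 = pospart (g t z) ^+ 2 / G ^+ 2 by rewrite expr_div_n.
apply; by field.
Qed.


Definition Mc (R : realType) (G F D c : R) :=
  D ^+ 2 + 3 * D + 2 * c ^+ 2 * G ^+ 2 + F ^+ 2 / G ^+ 2.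
Definition Cc (R : realType) (G F D c : R) :=
  Mc G F D c / (2 * c) + 4 * G ^+ 2 * Mc G F D c + 8 * G ^+ 3 * D * c + F ^+ 2.

Lemma final_arith (R : realType) (G F D c Tr Kr V Q s eta SF SP SU SQ : R) :
  0 < G -> 0 < c -> 0 <= D -> 0 <= V -> 1 <= Tr -> Kr <= Tr -> 1 <= Kr ->
  Q = Tr - Kr + 1 + V -> 0 <= s -> s ^+ 2 = Tr * Q -> 0 < eta ->
  eta * s = c * Q -> eta * Tr = c * s -> eta ^+ 2 * Tr = c ^+ 2 * Q ->
  2 * eta * SF + SP / (4 * G ^+ 2) <= SU + 2 * eta ^+ 2 * G ^+ 2 * Tr + SQ / G ^+ 2 ->
  SU <= D ^+ 2 + 3 * D * V -> SQ <= F ^+ 2 * (Tr - Kr) -> - (Tr * (G * D)) <= SF ->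
  0 <= SP -> SP <= Tr * F ^+ 2 ->
  SF <= Cc G F D c * s /\ SP <= Cc G F D c * s.
Proof.
move=> hG hc hD hV hT hKT hK1 hQ hs hs2 he hes heT he2 hsum hSU hSQ hSF hSP0 hSP.
have hG2 : 0 < G ^+ 2 by rewrite exprn_gt0.
set iG := G ^+ 2 in hG2 hsum *.
set M := Mc G F D c.
have hQ1 : 1 <= Q by lra.
have hVQ : V <= Q by lra.
have hTK : Tr - Kr <= Q by lra.
have hSQ' : SQ / iG <= F ^+ 2 / iG * Q.
  rewrite mulrAC ler_pM2r ?invr_gt0 //.
  apply: le_trans hSQ _; apply: ler_wpM2l; [exact: sqr_ge0 | lra].
have hSP4 : 0 <= SP / (4 * iG) by apply: divr_ge0 => //; lra.
have hDD : D ^+ 2 + 3 * D * V <= (D ^+ 2 + 3 * D) * Q.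
  have : 0 <= D ^+ 2 by exact: sqr_ge0.
  nra.
have hM0 : 0 <= M.
  rewrite /M /Mc; have := sqr_ge0 c; have := sqr_ge0 F; move=> hF hc2.
  have : 0 <= F ^+ 2 / iG by apply: divr_ge0 => //; exact: ltW.
  have := sqr_ge0 D; rewrite -/iG; nra.
have hB : SU + 2 * eta ^+ 2 * iG * Tr + SQ / iG <= M * Q.
  have -> : 2 * eta ^+ 2 * iG * Tr = 2 * c ^+ 2 * iG * Q.
    rewrite (_ : 2 * eta ^+ 2 * iG * Tr = 2 * iG * (eta ^+ 2 * Tr)); last by ring.
    by rewrite he2; ring.
  rewrite /M /Mc -/iG; nra.
have hMQ : M * Q = eta * (M * s / c).
  rewrite (_ : eta * (M * s / c) = M * (eta * s) / c); last by ring.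
  by rewrite hes; field; rewrite gt_eqF.
have hcs : 0 <= c * s by apply: mulr_ge0 => //; exact: ltW.
have hSF1 : 2 * eta * SF <= M * Q - SP / (4 * iG) by lra.
have hSFb : SF <= M * s / c / 2.
  have : eta * (2 * SF) <= eta * (M * s / c) by rewrite -hMQ; lra.
  rewrite ler_pM2l // => h; lra.
have hC1 : M * s / c / 2 = M / (2 * c) * s by field; rewrite gt_eqF.
have hrest : 0 <= 4 * iG * M + 8 * G ^+ 3 * D * c + F ^+ 2.
  have : 0 <= G ^+ 3 by apply: exprn_ge0; exact: ltW.
  have := sqr_ge0 F; move=> hF hG3.
  have : 0 <= G ^+ 3 * D * c by apply: mulr_ge0; [apply: mulr_ge0 | exact: ltW].
  nra.
have hCs : Cc G F D c * s = M / (2 * c) * s + (4 * iG * M + 8 * G ^+ 3 * D * c + F ^+ 2) * s.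
  by rewrite /Cc -/M -/iG; ring.
split.
  rewrite hCs; have : 0 <= (4 * iG * M + 8 * G ^+ 3 * D * c + F ^+ 2) * s by apply: mulr_ge0.
  lra.
have hSP2 : SP <= 4 * iG * M * Q + 8 * G ^+ 3 * D * c * s.
  have h1 : SP / (4 * iG) <= M * Q + eta * Tr * 2 * (G * D).
    have : 2 * eta * SF >= - (2 * (eta * Tr) * (G * D)).
      have : eta * (- (Tr * (G * D))) <= eta * SF by rewrite ler_pM2l.
      lra.
    lra.
  rewrite heT in h1.
  have h4 : 0 < 4 * iG by lra.
  move: h1; rewrite ler_pdivrMr // => h1.
  have -> : 8 * G ^+ 3 * D * c * s = c * s * 2 * (G * D) * (4 * iG) by rewrite /iG; ring.
  lra.
rewrite hCs.
have hMs : 0 <= M / (2 * c) * s.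
  apply: mulr_ge0 => //; apply: divr_ge0 => //; lra.
case: (lerP Q Tr) => hQT.
  have hQs : Q <= s.
    have : Q ^+ 2 <= s ^+ 2 by rewrite hs2 expr2; apply: ler_wpM2r; lra.
    nra.
  have : 4 * iG * M * Q <= 4 * iG * M * s.
    by apply: ler_wpM2l => //; apply: mulr_ge0 => //; lra.
  have : 0 <= 8 * G ^+ 3 * D * c.
    apply: mulr_ge0; [apply: mulr_ge0|exact: ltW] => //; apply: mulr_ge0; [lra|].
    by apply: exprn_ge0; exact: ltW.
  have := sqr_ge0 F; nra.
have hTs : Tr <= s.
  have : Tr ^+ 2 <= s ^+ 2 by rewrite hs2 expr2; apply: ler_wpM2l; lra.
  nra.
have h8 : 0 <= 8 * G ^+ 3 * D * c.
  apply: mulr_ge0; [apply: mulr_ge0|exact: ltW] => //; apply: mulr_ge0; [lra|].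
  by apply: exprn_ge0; exact: ltW.
have h4 : 0 <= 4 * iG * M by apply: mulr_ge0 => //; lra.
have : 0 <= (4 * iG * M + 8 * G ^+ 3 * D * c) * s by apply: mulr_ge0 => //; lra.
have : Tr * F ^+ 2 <= s * F ^+ 2 by apply: ler_wpM2r => //; exact: sqr_ge0.
lra.
Qed.

Unset Implicit Arguments.

Theorem theorem5p3 (R : realType) (G F D c : R) (hG : 0 < G) (hc : 0 < c) :
  exists C : R, forall (n : nat) (S0 : set 'rV[R]_n),
  compact S0 -> convex_set_of S0 ->
  (forall x y, S0 x -> S0 y -> enorm (x - y) <= D) ->
  forall (proj : 'rV[R]_n -> 'rV[R]_n), is_euclid_proj S0 proj ->
  forall (T K : nat) (V : R) (f g : nat -> 'rV[R]_n -> R)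
         (df dg : nat -> 'rV[R]_n -> 'rV[R]_n),
  (forall t, (1 <= t <= T)%N ->
     [/\ convex_fun_on S0 (f t), convex_fun_on S0 (g t)
       & forall x, S0 x ->
           [/\ is_subgrad_on S0 (f t) x (df t x), is_subgrad_on S0 (g t) x (dg t x),
               enorm (df t x) <= G & enorm (dg t x) <= G]
           /\ (f t x <= F /\ g t x <= F)]) ->
  0 <= V -> (1 <= K <= T)%N ->
  (exists z, in_VK S0 g T K V z) ->
  forall (th1 : 'rV[R]_n), S0 th1 ->
  let sigma := 2 * G ^+ 2 in
  let eta := c * Num.sqrt ((T%:R - K%:R + 1 + V) / T%:R) in
  let th := theta proj f g df dg sigma eta th1 in
  forall z, in_VK S0 g T K V z ->
    \sum_(1 <= t < T.+1) (f t (th t) - f t (z t))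
      <= C * Num.sqrt (T%:R * (T%:R - K%:R + 1 + V))
    /\ \sum_(1 <= t < T.+1) (pospart (g t (th t))) ^+ 2
      <= C * Num.sqrt (T%:R * (T%:R - K%:R + 1 + V)).
Proof.
exists (Cc G F D c).
move=> n S0 _ hS hD proj hp T K V f g df dg hfg hV /andP[hK1 hKT] _ th1 hth1
  sigma eta th z [hzS [hzV hzK]].
have hD0 : 0 <= D by apply: le_trans (hD _ _ hth1 hth1); exact: enorm_ge0.
have hT1 : (1 <= T)%N by apply: leq_trans hKT.
set Tr := T%:R; set Kr := K%:R.
have hTr : 1 <= Tr by rewrite /Tr ler1n.
have hKr1 : 1 <= Kr by rewrite /Kr ler1n.
have hKTr : Kr <= Tr by rewrite /Kr /Tr ler_nat.
set Q := Tr - Kr + 1 + V.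
have hQ1 : 1 <= Q by rewrite /Q; lra.
set s := Num.sqrt (Tr * Q).
have eta_def : eta = c * Num.sqrt (Q / Tr) by [].
have hs0 : 0 <= s := sqrtr_ge0 _.
have hs2 : s ^+ 2 = Tr * Q by rewrite sqr_sqrtr //; apply: mulr_ge0; lra.
have hQT0 : 0 <= Q / Tr by apply: divr_ge0; lra.
have hTne : Tr != 0 by rewrite gt_eqF //; lra.
have hsq : Num.sqrt (Q / Tr) * Tr = s.
  rewrite /s (_ : Tr * Q = Q / Tr * Tr ^+ 2); last by field.
  rewrite [in RHS]sqrtrM // sqrtr_sqr ger0_norm //; lra.
have he2 : eta ^+ 2 * Tr = c ^+ 2 * Q.
  by rewrite eta_def exprMn sqr_sqrtr //; field.
have heT : eta * Tr = c * s by rewrite eta_def -mulrA hsq.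
have hes : eta * s = c * Q.
  rewrite -hsq eta_def.
  rewrite (_ : c * Num.sqrt (Q / Tr) * (Num.sqrt (Q / Tr) * Tr)
     = c * (Num.sqrt (Q / Tr) ^+ 2 * Tr)); last by ring.
  by rewrite sqr_sqrtr //; field; exact: hTne.
have he : 0 < eta.
  rewrite eta_def mulr_gt0 // sqrtr_gt0 divr_gt0 //; lra.
have hth : forall t, (1 <= t)%N -> S0 (th t).
  case=> [//|t] _; rewrite /th /theta /=.
  elim: t => [//|t IH] /=; exact: (hp _).1.
have hthS : forall t, (1 <= t)%N -> th t.+1 =
   proj (th t - eta *: lag_grad f g df dg t (th t) (lam_of g sigma eta t (th t))).
  by case=> [//|t] _.
set u := fun t => dotv (th t - z t) (th t - z t).
set w := fun t => dotv (th t.+1 - z t) (th t.+1 - z t).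
set p := fun t => pospart (g t (th t)).
set q := fun t => pospart (g t (z t)).
have hstep : forall t, (1 <= t < T.+1)%N ->
  2 * eta * (f t (th t) - f t (z t)) + p t ^+ 2 / (4 * G ^+ 2)
  <= (u t - w t + 2 * eta ^+ 2 * G ^+ 2) + q t ^+ 2 / G ^+ 2.
  move=> t /andP[ht1 htT].
  have htT' : (1 <= t <= T)%N by rewrite ht1.
  have [_ _ /(_ _ (hth _ ht1)) [[sf sg nf ng] _]] := hfg t htT'.
  have := step_vec hS hp hG he (hth _ ht1) (hzS _ htT') sf sg nf ng.
  by rewrite /u /w /p /q hthS.
have hsum := ler_sum_nat hstep.
rewrite big_split /= -mulr_sumr -mulr_suml in hsum.
have eR : \sum_(1 <= i < T.+1) (u i - w i + 2 * eta ^+ 2 * G ^+ 2 + q i ^+ 2 / G ^+ 2)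
  = \sum_(1 <= i < T.+1) (u i - w i) + 2 * eta ^+ 2 * G ^+ 2 * Tr
    + (\sum_(1 <= i < T.+1) q i ^+ 2) / G ^+ 2.
  rewrite big_split /= big_split /= sumr_const_nat subSS subn0 -mulr_suml.
  by rewrite mulr_natr.
rewrite eR in hsum.
have hSU : \sum_(1 <= t < T.+1) (u t - w t) <= D ^+ 2 + 3 * D * V.
  rewrite (my_telescope u w hT1).
  have hu1 : u 1%N <= D ^+ 2.
    by apply: N_le; apply: hD; [apply: hth | apply: hzS; rewrite hT1].
  have hwT : 0 <= w T by exact: dotv_ge0.
  have : \sum_(2 <= t < T.+1) (u t - w t.-1) <= 3 * D * V.
    apply: le_trans (_ : \sum_(2 <= t < T.+1) 3 * D * enorm (z t - z t.-1) <= _).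
      apply: ler_sum_nat => t /andP[ht2 htT].
      have ht1 : (1 <= t)%N by apply: leq_trans ht2.
      have hp1 : (1 <= t.-1 <= T)%N.
        by rewrite -ltnS prednK // ht2 /=; apply: leq_trans (leq_pred _) _; rewrite -ltnS.
      have htT' : (1 <= t <= T)%N by rewrite ht1 -ltnS.
      rewrite /u /w prednK //.
      apply: shift_bound => //; apply: hD; auto.
    rewrite -mulr_sumr; apply: ler_wpM2l => //; lra.
  lra.
have hSQ : \sum_(1 <= t < T.+1) q t ^+ 2 <= F ^+ 2 * (Tr - Kr).
  rewrite -(@count_ind R (fun t => g t (z t) <= 0) T K hzK) mulr_sumr.
  apply: ler_sum_nat => t /andP[ht1 htT].
  have htT' : (1 <= t <= T)%N by rewrite ht1 -ltnS.
  have [_ _ /(_ _ (hzS _ htT')) [_ [_ hgF]]] := hfg t htT'.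
  rewrite /q; case: ifP => hg.
    by rewrite pospart_npos // expr2 mul0r mulr0.
  rewrite mulr1 pospart_pos; last by rewrite ltNge hg.
  have : 0 < g t (z t) by rewrite ltNge hg.
  move=> h0; rewrite !expr2; nra.
have hSF : - (Tr * (G * D)) <= \sum_(1 <= t < T.+1) (f t (th t) - f t (z t)).
  have -> : - (Tr * (G * D)) = \sum_(1 <= t < T.+1) (- (G * D)).
    by rewrite sumr_const_nat subSS subn0 -mulr_natr /Tr; ring.
  apply: ler_sum_nat => t /andP[ht1 htT].
  have htT' : (1 <= t <= T)%N by rewrite ht1 -ltnS.
  have hzt := hzS _ htT'.
  have [_ _ /(_ _ hzt) [[sf _ nf _] _]] := hfg t htT'.
  have h1 := sf _ (hth _ ht1).
  have h2 := CS (df t (z t)) (z t - th t).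
  have h3 : enorm (z t - th t) <= D by apply: hD => //; exact: hth.
  have h4 := enorm_ge0 (df t (z t)); have h5 := enorm_ge0 (z t - th t).
  have h6 : enorm (df t (z t)) * enorm (z t - th t) <= G * D by apply: ler_pM.
  move: h1; rewrite -opprB dotvNr => h1.
  lra.
have hSP0 : 0 <= \sum_(1 <= t < T.+1) p t ^+ 2.
  by apply: sumr_ge0 => t _; exact: sqr_ge0.
have hSP : \sum_(1 <= t < T.+1) p t ^+ 2 <= Tr * F ^+ 2.
  have -> : Tr * F ^+ 2 = \sum_(1 <= t < T.+1) F ^+ 2.
    by rewrite sumr_const_nat subSS subn0 -mulr_natr /Tr mulrC.
  apply: ler_sum_nat => t /andP[ht1 htT].
  have htT' : (1 <= t <= T)%N by rewrite ht1 -ltnS.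
  have [_ _ /(_ _ (hth _ ht1)) [_ [_ hgF]]] := hfg t htT'.
  rewrite /p; case: (lerP (g t (th t)) 0) => hg.
    by rewrite pospart_npos // expr2 mul0r; exact: sqr_ge0.
  rewrite pospart_pos // !expr2; nra.
have := @final_arith R G F D c Tr Kr V Q s eta _ _ _ _ hG hc hD0 hV hTr hKTr hKr1
  erefl hs0 hs2 he hes heT he2 hsum hSU hSQ hSF hSP0 hSP.
by [].
Qed.
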